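(* Let $f:\{0,1\}^n\to\{0,1\}$, let $\mathcal D$ be a distribution on $\{0,1\}^n$, and let $a\in\mathbb C^{2^n}$ be a unit vector with $\mathcal D(x)=|a_x|^2$ for all $x$. Let $\Gamma\in\mathbb R^{2^n\times 2^n}$ be a nonzero adversary matrix for $f$ having $a$ as a principal eigenvector. Consider a memoryless quantum query algorithm accessing $x\sim\mathcal D$, with joint state after $t$ queries $|\psi^t\rangle=\sum_{x}a_x|\psi_x^t\rangle\otimes|x\rangle$, and define $\Delta_t=\|\Gamma\|-|\langle\psi^t|(I\otimes\Gamma)|\psi^t\rangle|$. Then: (i) $\Delta_0=0$; (ii) $\Delta_{t+1}\le\Delta_t+2\max_{i\in\{1,\dots,n\}}\|\Gamma_i\|$ for each $t$; (iii) the average success probability after $T$ queries satisfies $p_{\mathrm{succ}}^{\mathcal D}\le\frac12+\sqrt{\Delta_T/(2\|\Gamma\|)}$. Consequently, $Q_{\mathcal D}(f)\ge\frac{\|\Gamma\|}{36\max_{i}\|\Gamma_i\|}$.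
   Context: Query model: the algorithm space has basis $|i,b\rangle$, $i\in\{1,\dots,n\}$, $b\in\{0,1\}$; $O_x|i,b\rangle=|i,b\oplus x_i\rangle$; a memoryless $T$-query algorithm is a sequence of unitaries $U_0,\dots,U_T$, with $|\psi_x^t\rangle=U_tO_x\cdots U_1O_xU_0|\mathrm{init}\rangle$ for a fixed basis state $|\mathrm{init}\rangle$; its output is the measured value register of the final state. The average success probability is $p_{\mathrm{succ}}^{\mathcal D}=\sum_x\mathcal D(x)\|(I\otimes|f(x)\rangle\langle f(x)|)|\psi_x^T\rangle\|^2$, and $Q_{\mathcal D}(f)$ is the smallest $T$ such that some $T$-query algorithm has $p_{\mathrm{succ}}^{\mathcal D}\ge 2/3$. An adversary matrix for $f$ is a real symmetric $\Gamma\in\mathbb R^{2^n\times2^n}$ (rows/columns indexed by $\{0,1\}^n$) with $\Gamma_{x,y}=0$ whenever $f(x)=f(y)$. For $i\in\{1,\dots,n\}$, $\Gamma_i$ is the matrix with $(\Gamma_i)_{x,y}=\Gamma_{x,y}$ if $x_i\ne y_i$ and $0$ otherwise. $\|\cdot\|$ on matrices is the spectral norm; a principal eigenvector is a unit eigenvector whose eigenvalue has absolute value $\|\Gamma\|$. *)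

(* Defs.v *)
From HB Require Import structures.
From mathcomp Require Import all_boot all_order all_algebra.
From mathcomp Require Import boolp classical_sets reals.
From mathcomp Require Import complex.
Set Implicit Arguments. Unset Strict Implicit. Unset Printing Implicit Defensive.
Import Order.TTheory GRing.Theory Num.Theory.
Local Open Scope ring_scope.

Section QueryDefs.
Variable R : realType.
Local Notation C := R[i].

Definition cabs (z : C) : R := ComplexField.Normc.normc z.
Definition cconj (z : C) : C := conjc z.

Definition input (n : nat) := {ffun 'I_n -> bool}.

Definition rvnorm (X : finType) (v : X -> R) : R := Num.sqrt (\sum_(x : X) v x ^+ 2).
Definition rmatvec (X : finType) (M : X -> X -> R) (v : X -> R) : X -> R :=
  fun x => \sum_(y : X) M x y * v y.

Definition specnorm (X : finType) (M : X -> X -> R) : R :=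
  sup [set r : R | exists v : X -> R, rvnorm v = 1 /\ r = rvnorm (rmatvec M v)].

Definition adversary_matrix n (f : input n -> bool) (G : input n -> input n -> R) :=
  (forall x y, G x y = G y x) /\ (forall x y, f x = f y -> G x y = 0).

Definition Gamma_i n (G : input n -> input n -> R) (i : 'I_n) : input n -> input n -> R :=
  fun x y => if x i != y i then G x y else 0.

Definition maxGi n (G : input n -> input n -> R) : R :=
  \big[Num.max/0]_(i < n) specnorm (Gamma_i G i).

Definition cinner (X : finType) (u v : X -> C) : C := \sum_(x : X) cconj (u x) * v x.
Definition cnorm2 (X : finType) (v : X -> C) : R := \sum_(x : X) cabs (v x) ^+ 2.
Definition cmatvec (X : finType) (M : X -> X -> C) (v : X -> C) : X -> C :=
  fun x => \sum_(y : X) M x y * v y.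
Definition basis_vec (X : finType) (s : X) : X -> C := fun x => (x == s)%:R.

Definition unitary (X : finType) (U : X -> X -> C) :=
  (forall j k, \sum_(i : X) cconj (U i j) * U i k = (j == k)%:R) /\
  (forall j k, \sum_(i : X) U j i * cconj (U k i) = (j == k)%:R).

Definition principal_eigvec n (G : input n -> input n -> R) (a : input n -> C) :=
  cnorm2 a = 1 /\
  exists lam : C, cabs lam = specnorm G /\
    forall x, \sum_(y : input n) (G x y)%:C%C * a y = lam * a x.

(** algorithm space: basis |i,b>, i in 'I_n, b in {0,1} *)
Definition aspace n := ('I_n * bool)%type.

Definition oracle n (x : input n) (phi : aspace n -> C) : aspace n -> C :=
  fun s => phi (s.1, s.2 (+) x s.1).

Fixpoint qstate n (U : nat -> aspace n -> aspace n -> C) (init : aspace n)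
  (x : input n) (t : nat) : aspace n -> C :=
  match t with
  | 0 => cmatvec (U 0%N) (basis_vec init)
  | t'.+1 => cmatvec (U t) (oracle x (qstate U init x t'))
  end.

Definition memoryless_alg n (T : nat) (U : nat -> aspace n -> aspace n -> C) :=
  forall t, (t <= T)%N -> unitary (U t).

Definition joint_state n (a : input n -> C) U init t :
  (aspace n * input n)%type -> C :=
  fun z => a z.2 * qstate U init z.2 t z.1.

Definition IxGamma n (G : input n -> input n -> R)
  (Phi : (aspace n * input n)%type -> C) : (aspace n * input n)%type -> C :=
  fun z => \sum_(y : input n) (G z.2 y)%:C%C * Phi (z.1, y).

Definition Delta n (G : input n -> input n -> R) (a : input n -> C) U init t : R :=
  specnorm G - cabs (cinner (joint_state a U init t) (IxGamma G (joint_state a U init t))).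

Definition proj_value n (c : bool) (phi : aspace n -> C) : aspace n -> C :=
  fun s => if s.2 == c then phi s else 0.

Definition psucc n (f : input n -> bool) (D : input n -> R) U init T : R :=
  \sum_(x : input n) D x * cnorm2 (proj_value (f x) (qstate U init x T)).

(** some T-query memoryless algorithm succeeds w.p. >= 2/3 under D
    (Q_D(f) is the least such T) *)
Definition solves_avg n (f : input n -> bool) (D : input n -> R) (T : nat) :=
  exists U init, memoryless_alg T U /\ 2 / 3 <= psucc f D U init T.

End QueryDefs.

(* Main.v *)
Require Import Defs.
From HB Require Import structures.
From mathcomp Require Import all_boot all_order all_algebra.
From mathcomp Require Import boolp classical_sets reals.
From mathcomp Require Import complex.
From mathcomp Require Import ring lra.
Import Order.TTheory GRing.Theory Num.Theory.
Local Open Scope ring_scope.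
Set Implicit Arguments. Unset Strict Implicit. Unset Printing Implicit Defensive.


Section Cx.
Variable R : realType.
Local Notation C := R[i].
Local Notation Re := (@complex.Re R).
Local Notation Im := (@complex.Im R).

Lemma cabs2 (z : C) : cabs z ^+ 2 = Re z ^+ 2 + Im z ^+ 2.
Proof. by case: z => a b; rewrite /cabs /= sqr_sqrtr // addr_ge0 ?sqr_ge0. Qed.

Lemma cabs_ge0 (z : C) : 0 <= cabs z.
Proof. by case: z => a b; rewrite /cabs /= sqrtr_ge0. Qed.

Lemma cabsM (z w : C) : cabs (z * w) = cabs z * cabs w.
Proof. exact: ComplexField.Normc.normcM. Qed.

Lemma cabsD (z w : C) : cabs (z + w) <= cabs z + cabs w.
Proof. exact: le_normcD. Qed.

Lemma cabs_conj (z : C) : cabs (cconj z) = cabs z.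
Proof. by case: z => a b; rewrite /cabs /cconj /= sqrrN. Qed.

Lemma conjM (z : C) : cconj z * z = (cabs z ^+ 2)%:C%C.
Proof. rewrite cabs2; case: z => a b /=. apply/eqP; rewrite eq_complex /=; apply/andP; split; apply/eqP; ring. Qed.

Lemma Re_conjM (u z : C) : Re (cconj u * z) = Re u * Re z + Im u * Im z.
Proof. case: u => a b; case: z => c d /=; ring. Qed.

Lemma Re_sum (I : finType) (F : I -> C) : Re (\sum_i F i) = \sum_i Re (F i).
Proof. exact: (raddf_sum (Re : Rcomplex R -> R)). Qed.
Lemma Im_sum (I : finType) (F : I -> C) : Im (\sum_i F i) = \sum_i Im (F i).
Proof. exact: (raddf_sum (Im : Rcomplex R -> R)). Qed.
Lemma Re_rM (m : R) (v : C) : Re ((m%:C)%C * v) = m * Re v.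
Proof. case: v => c d /=; ring. Qed.
Lemma Im_rM (m : R) (v : C) : Im ((m%:C)%C * v) = m * Im v.
Proof. case: v => c d /=; ring. Qed.
Lemma conj_real (m : R) : cconj (m%:C)%C = (m%:C)%C.
Proof. by rewrite /cconj /= oppr0. Qed.
Lemma cconjM (z w : C) : cconj (z * w) = cconj z * cconj w.
Proof. exact: rmorphM. Qed.
Lemma cconjD (z w : C) : cconj (z + w) = cconj z + cconj w.
Proof. exact: rmorphD. Qed.
Lemma cabs_real (m : R) : cabs (m%:C)%C = `|m|.
Proof. by rewrite /cabs /= expr0n addr0 sqrtr_sqr. Qed.
End Cx.


Section Spec.
Local Open Scope classical_set_scope.
Variable R : realType.
Variable X : finType.
Variable x0 : X.
Implicit Types (M : X -> X -> R) (v q : X -> R).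

Lemma sumsq_ge0 v : 0 <= \sum_x v x ^+ 2.
Proof. by apply: sumr_ge0 => x _; rewrite sqr_ge0. Qed.

Lemma rvnorm_sq v : rvnorm v ^+ 2 = \sum_x v x ^+ 2.
Proof. by rewrite /rvnorm sqr_sqrtr // sumsq_ge0. Qed.

Lemma rvnorm_ge0 v : 0 <= rvnorm v.
Proof. exact: sqrtr_ge0. Qed.

Lemma sumsq_eq0 v : \sum_x v x ^+ 2 = 0 -> forall x, v x = 0.
Proof.
move=> /eqP; rewrite psumr_eq0 => [/allP H x|x _]; last by rewrite sqr_ge0.
have := H x (mem_index_enum x); rewrite /= sqrf_eq0 => /eqP //.
Qed.

Definition specset M := [set r : R | exists v : X -> R, rvnorm v = 1 /\ r = rvnorm (rmatvec M v)].

Lemma specset_has_sup M : has_sup (specset M).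
Proof.
split.
  exists (rvnorm (rmatvec M (fun x => (x == x0)%:R))).
  exists (fun x => (x == x0)%:R); split => //.
  rewrite /rvnorm (bigD1 x0) //= eqxx expr1n big1 ?addr0 ?sqrtr1 // => x /negbTE ->.
  by rewrite expr0n.
exists (Num.sqrt (\sum_x (\sum_y `|M x y|) ^+ 2)) => r [v [v1 ->]].
rewrite /rvnorm ler_wsqrtr // ler_sum // => x _.
have vb y : `|v y| <= 1.
  have : v y ^+ 2 <= 1.
    have S1 : \sum_x v x ^+ 2 = 1 by rewrite -rvnorm_sq v1 expr1n.
    rewrite -S1 (bigD1 y) //= lerDl.
    by apply: sumr_ge0 => z _; rewrite sqr_ge0.
  by rewrite -real_normK ?num_real // expr_le1.
rewrite -real_normK ?num_real // ler_pXn2r ?nnegrE ?sumr_ge0 //.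
rewrite /rmatvec (le_trans (ler_norm_sum _ _ _)) // ler_sum // => y _.
by rewrite normrM ler_piMr.
Qed.

Lemma specnorm_ub M v : rvnorm v = 1 -> rvnorm (rmatvec M v) <= specnorm M.
Proof. by move=> v1; apply: (sup_upper_bound (specset_has_sup M)); exists v. Qed.

Lemma specnorm_ge0 M : 0 <= specnorm M.
Proof.
have [[r [v [v1 _]]] _] := specset_has_sup M.
exact: le_trans (rvnorm_ge0 _) (specnorm_ub M v1).
Qed.

Lemma specnorm_bound M q : rvnorm (rmatvec M q) <= specnorm M * rvnorm q.
Proof.
have [q0|qn0] := eqVneq (rvnorm q) 0.
  have qz : forall x, q x = 0.
    by apply: sumsq_eq0; rewrite -rvnorm_sq q0 expr0n.
  rewrite q0 mulr0 /rvnorm /rmatvec big1 ?sqrtr0 // => x _.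
  by rewrite big1 ?expr0n // => y _; rewrite qz mulr0.
have qp : 0 < rvnorm q by rewrite lt_def qn0 rvnorm_ge0.
set v := fun x => q x / rvnorm q.
have v1 : rvnorm v = 1.
  rewrite /rvnorm /v.
  under eq_bigr do rewrite expr_div_n.
  by rewrite -mulr_suml -rvnorm_sq divff ?sqrtr1 // sqrf_eq0.
have := specnorm_ub M v1.
have -> : rvnorm (rmatvec M v) = rvnorm (rmatvec M q) / rvnorm q.
  rewrite /rvnorm /rmatvec /v.
  under eq_bigr do under eq_bigr do rewrite mulrA.
  under eq_bigr do rewrite -mulr_suml expr_div_n.
  rewrite -mulr_suml sqrtrM ?sumsq_ge0 // sqrtrV ?sqr_ge0 //.
  by rewrite sqrtr_sqr ger0_norm // ?rvnorm_ge0.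
by rewrite ler_pdivrMr.
Qed.

Lemma specnorm_bound2 M q :
  \sum_x (rmatvec M q x) ^+ 2 <= specnorm M ^+ 2 * \sum_x q x ^+ 2.
Proof.
rewrite -!rvnorm_sq -exprMn ler_pXn2r ?nnegrE ?rvnorm_ge0 ?mulr_ge0 ?specnorm_ge0 //.
  exact: specnorm_bound.
exact: rvnorm_ge0.
Qed.
End Spec.

Section Bil.
Variable R : realType.
Local Notation C := R[i].
Local Notation Re := (@complex.Re R).
Local Notation Im := (@complex.Im R).

Lemma RL (X : finType) (M : X -> X -> R) (s : R) (hs : 0 <= s)
  (hb : forall q, \sum_x (rmatvec M q x) ^+ 2 <= s ^+ 2 * \sum_x q x ^+ 2)
  (p q : X -> R) :
  2 * \sum_x p x * rmatvec M q x <= s * (\sum_x p x ^+ 2 + \sum_x q x ^+ 2).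
Proof.
set w := rmatvec M q.
have W0 := sumsq_ge0 w.
have P0 := sumsq_ge0 p.
have Q0 := sumsq_ge0 q.
have hq := hb q; rewrite -/w in hq.
have [s0|sp] := eqVneq s 0.
  have wz : forall x, w x = 0.
    apply: sumsq_eq0; apply/le_anti; rewrite W0 andbT.
    by move: hq; rewrite s0 expr0n /= mul0r.
  by rewrite s0 mul0r big1 ?mulr0 // => x _; rewrite wz mulr0.
have s_gt0 : 0 < s by rewrite lt_def sp hs.
have E : \sum_x (s * p x - w x) ^+ 2 =
    s ^+ 2 * \sum_x p x ^+ 2 - 2 * s * \sum_x p x * w x + \sum_x w x ^+ 2.
  transitivity (\sum_x (s ^+ 2 * p x ^+ 2 - 2 * s * (p x * w x) + w x ^+ 2)).
    by apply: eq_bigr => x _; ring.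
  by rewrite big_split /= sumrB -!mulr_sumr.
have H := sumsq_ge0 (fun x => s * p x - w x); rewrite /= E in H.
rewrite -(ler_pM2l s_gt0).
set PW := \sum_x p x * w x in H *.
set P := \sum_x p x ^+ 2 in H P0 *.
set Q := \sum_x q x ^+ 2 in hq Q0 *.
set W := \sum_x w x ^+ 2 in H hq W0 *.
nra.
Qed.

Definition Bf (K X : finType) (M : X -> X -> R) (U V : K -> X -> C) : C :=
  \sum_k \sum_x cconj (U k x) * \sum_y (M x y)%:C%C * V k y.
Definition Nf (K X : finType) (U : K -> X -> C) : R :=
  \sum_k \sum_x cabs (U k x) ^+ 2.

Lemma Nf_ge0 (K X : finType) (U : K -> X -> C) : 0 <= Nf U.
Proof. by apply: sumr_ge0 => k _; apply: sumr_ge0 => x _; rewrite sqr_ge0. Qed.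

Lemma ReBf (K X : finType) (M : X -> X -> R) (U V : K -> X -> C) :
  Re (Bf M U V) = \sum_k (\sum_x Re (U k x) * rmatvec M (fun y => Re (V k y)) x
                        + \sum_x Im (U k x) * rmatvec M (fun y => Im (V k y)) x).
Proof.
rewrite /Bf Re_sum; apply: eq_bigr => k _; rewrite Re_sum -big_split.
apply: eq_bigr => x _; rewrite Re_conjM Re_sum Im_sum /rmatvec.
by congr (_ * _ + _ * _); apply: eq_bigr => y _; rewrite ?Re_rM ?Im_rM.
Qed.

Section GL.
Variables (K X : finType) (M : X -> X -> R) (s : R) (hs : 0 <= s)
  (hb : forall q, \sum_x (rmatvec M q x) ^+ 2 <= s ^+ 2 * \sum_x q x ^+ 2).

Lemma ReBf_le (U V : K -> X -> C) : 2 * Re (Bf M U V) <= s * (Nf U + Nf V).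
Proof.
rewrite ReBf /Nf -big_split mulr_sumr mulr_sumr ler_sum // => k _ /=.
have e1 (Y : K -> X -> C) : \sum_x cabs (Y k x) ^+ 2 =
    \sum_x Re (Y k x) ^+ 2 + \sum_x Im (Y k x) ^+ 2.
  by rewrite -big_split; apply: eq_bigr => x _; exact: cabs2.
rewrite !e1.
have := RL hs hb (fun x => Re (U k x)) (fun y => Re (V k y)).
have := RL hs hb (fun x => Im (U k x)) (fun y => Im (V k y)).
move=> /= h1 h2; nra.
Qed.

Lemma GL (U V : K -> X -> C) : 2 * cabs (Bf M U V) <= s * (Nf U + Nf V).
Proof.
set b := Bf M U V.
have [b0|bn0] := eqVneq b 0.
  by rewrite b0 /cabs /= expr0n addr0 sqrtr0 mulr0 mulr_ge0 // addr_ge0 ?Nf_ge0.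
have cb0 : cabs b != 0 by apply: contra bn0 => /eqP /ComplexField.Normc.eq0_normc ->.
set w := cconj b / (cabs b)%:C%C.
have wb : w * b = (cabs b)%:C%C.
  rewrite /w mulrAC conjM -fmorphV /= -rmorphM /=.
  by rewrite expr2 -mulrA divff // mulr1.
have Bw : Bf M U (fun k x => w * V k x) = w * b.
  rewrite /b /Bf mulr_sumr; apply: eq_bigr => k _; rewrite mulr_sumr.
  apply: eq_bigr => x _; rewrite mulrCA; congr (_ * _).
  by rewrite mulr_sumr; apply: eq_bigr => y _; rewrite mulrCA.
have cw : cabs w = 1.
  rewrite /w cabsM cabs_conj -fmorphV cabs_real ger0_norm ?divff //.
  by rewrite invr_ge0 cabs_ge0.
have Nw : Nf (fun k x => w * V k x) = Nf V.
  by apply: eq_bigr => k _; apply: eq_bigr => x _; rewrite cabsM cw mul1r.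
have := ReBf_le U (fun k x => w * V k x).
by rewrite Bw wb Nw /=.
Qed.

Lemma GLc (U V : K -> X -> C) (c : R) : c != 0 ->
  2 * cabs (Bf M U V) <= s * (c ^+ 2 * Nf U + Nf V / c ^+ 2).
Proof.
move=> c0.
have cc : (c%:C%C * (c^-1)%:C%C = 1 :> C) by rewrite -rmorphM /= mulfV // rmorph1.
have E : Bf M (fun k x => c%:C%C * U k x) (fun k x => (c^-1)%:C%C * V k x) = Bf M U V.
  apply: eq_bigr => k _; apply: eq_bigr => x _.
  rewrite cconjM conj_real.
  have -> : \sum_y (M x y)%:C%C * ((c^-1)%:C%C * V k y) =
            (c^-1)%:C%C * \sum_y (M x y)%:C%C * V k y.
    by rewrite mulr_sumr; apply: eq_bigr => y _; rewrite mulrCA.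
  by rewrite mulrCA !mulrA [_ * c%:C%C]mulrC cc mul1r.
have N1 : Nf (fun k x => c%:C%C * U k x) = c ^+ 2 * Nf U.
  rewrite /Nf mulr_sumr; apply: eq_bigr => k _; rewrite mulr_sumr.
  by apply: eq_bigr => x _; rewrite cabsM cabs_real exprMn real_normK ?num_real.
have N2 : Nf (fun k x => (c^-1)%:C%C * V k x) = Nf V / c ^+ 2.
  rewrite /Nf mulr_suml; apply: eq_bigr => k _; rewrite mulr_suml.
  apply: eq_bigr => x _; rewrite cabsM cabs_real exprMn real_normK ?num_real //.
  by rewrite exprVn mulrC.
by rewrite -E -N1 -N2 GL.
Qed.
End GL.
End Bil.
Section Gen.
Variable R : realType.
Local Notation C := R[i].
Local Notation Re := (@complex.Re R).
Local Notation Im := (@complex.Im R).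

Lemma cabs_sum (I : finType) (F : I -> C) : cabs (\sum_i F i) <= \sum_i cabs (F i).
Proof.
apply: (big_ind2 (fun z r => cabs z <= r)) => //.
- by rewrite /cabs /= expr0n addr0 sqrtr0.
- by move=> z1 r1 z2 r2 h1 h2; rewrite (le_trans (cabsD _ _)) // lerD.
Qed.

Lemma cabsN (z : C) : cabs (- z) = cabs z.
Proof. exact: normcN. Qed.

Lemma cabs0 : cabs (0 : C) = 0.
Proof. by rewrite /cabs /= expr0n addr0 sqrtr0. Qed.

Lemma cabs_eq0 (z : C) : cabs z = 0 -> z = 0.
Proof. exact: ComplexField.Normc.eq0_normc. Qed.

Lemma cinner_norm (X : finType) (v : X -> C) : cinner v v = (cnorm2 v)%:C%C.
Proof. by rewrite /cinner /cnorm2 rmorph_sum; apply: eq_bigr => x _; rewrite conjM. Qed.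

Lemma cmatvec_basis (X : finType) (M : X -> X -> C) j s :
  cmatvec M (@basis_vec R X j) s = M s j.
Proof.
rewrite /cmatvec (bigD1 j) //= /basis_vec eqxx mulr1 big1 ?addr0 // => k /negbTE ->.
by rewrite mulr0.
Qed.

Lemma unitary_inner (X : finType) (M : X -> X -> C) (phi chi : X -> C) :
  unitary M -> cinner (cmatvec M phi) (cmatvec M chi) = cinner phi chi.
Proof.
move=> [HU _]; rewrite /cinner /cmatvec.
transitivity (\sum_s \sum_j \sum_k cconj (M s j) * cconj (phi j) * (M s k * chi k)).
  apply: eq_bigr => s _; rewrite /cconj rmorph_sum mulr_suml; apply: eq_bigr => j _.
  by rewrite mulr_sumr rmorphM.
rewrite exchange_big; apply: eq_bigr => j _; rewrite exchange_big /=.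
transitivity (\sum_k cconj (phi j) * chi k * \sum_s cconj (M s j) * M s k).
  apply: eq_bigr => k _; rewrite mulr_sumr; apply: eq_bigr => s _; ring.
rewrite (bigD1 j) //= HU eqxx mulr1 big1 ?addr0 // => k /negbTE kj.
by rewrite HU eq_sym kj mulr0.
Qed.

Lemma cinner_sumbool (n : nat) (phi chi : aspace n -> C) :
  cinner phi chi = \sum_(i < n) (cconj (phi (i, true)) * chi (i, true) +
                                 cconj (phi (i, false)) * chi (i, false)).
Proof.
rewrite /cinner.
transitivity (\sum_(p : aspace n) cconj (phi (p.1, p.2)) * chi (p.1, p.2)).
  by apply: eq_bigr => -[i b].
rewrite -(pair_bigA _ (fun i b => cconj (phi (i, b)) * chi (i, b))) /=.
by apply: eq_bigr => i _; rewrite big_bool.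
Qed.

Lemma oracle_inner (n : nat) (x y : input n) (phi chi : aspace n -> C) :
  cinner (oracle x phi) (oracle y chi) - cinner phi chi =
  \sum_(i < n) (if x i != y i then
     cconj (phi (i, true)) * (chi (i, false) - chi (i, true)) +
     cconj (phi (i, false)) * (chi (i, true) - chi (i, false)) else 0).
Proof.
rewrite !cinner_sumbool -sumrB; apply: eq_bigr => i _ /=.
rewrite /oracle /=.
by case: (x i); case: (y i) => /=; ring.
Qed.

Lemma Bf_swap (S X : finType) (M : X -> X -> R) (Psi Phi : X -> S -> C) (a : X -> C) :
  Bf M (fun s x => a x * Psi x s) (fun s x => a x * Phi x s) =
  \sum_x \sum_y (M x y)%:C%C * (cconj (a x) * a y) * cinner (Psi x) (Phi y).
Proof.
rewrite /Bf.
transitivity (\sum_s \sum_x \sum_y (M x y)%:C%C * (cconj (a x) * a y) *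
                 (cconj (Psi x s) * Phi y s)).
  apply: eq_bigr => s _; apply: eq_bigr => x _; rewrite mulr_sumr.
  by apply: eq_bigr => y _; rewrite cconjM; ring.
rewrite exchange_big; apply: eq_bigr => x _; rewrite exchange_big.
apply: eq_bigr => y _; rewrite /cinner mulr_sumr; done.
Qed.

Lemma Bf_zeroR (K X : finType) (M : X -> X -> R) (U V : K -> X -> C) :
  (forall k x, V k x = 0) -> Bf M U V = 0.
Proof.
move=> V0; rewrite /Bf big1 // => k _; rewrite big1 // => x _.
by rewrite big1 ?mulr0 // => y _; rewrite V0 mulr0.
Qed.

Lemma Bf_zeroL (K X : finType) (M : X -> X -> R) (U V : K -> X -> C) :
  (forall k x, U k x = 0) -> Bf M U V = 0.
Proof.
move=> U0; rewrite /Bf big1 // => k _; rewrite big1 // => x _.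
by rewrite U0 /cconj /= oppr0 mul0r.
Qed.

Lemma Nf_eq0 (K X : finType) (U : K -> X -> C) : Nf U = 0 -> forall k x, U k x = 0.
Proof.
move=> /eqP; rewrite psumr_eq0 => [/allP H k x|k _]; last first.
  by apply: sumr_ge0 => x _; rewrite sqr_ge0.
have := H k (mem_index_enum k); rewrite /= psumr_eq0 => [/allP H2|y _]; last by rewrite sqr_ge0.
have := H2 x (mem_index_enum x); rewrite /= sqrf_eq0 => /eqP.
exact: cabs_eq0.
Qed.

Lemma le_bigmax0 (n : nat) (F : 'I_n -> R) i : F i <= \big[Num.max/0]_(j < n) F j.
Proof. by rewrite (bigD1 i) //= le_max lexx. Qed.

Lemma bigmax0_ge0 (n : nat) (F : 'I_n -> R) : 0 <= \big[Num.max/0]_(j < n) F j.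
Proof.
elim/big_rec: _ => // i x _ hx.
by rewrite le_max hx orbT.
Qed.
End Gen.
Section Main.
Variables (R : realType) (n : nat) (f : input n -> bool) (D : input n -> R)
  (a : input n -> R[i]) (G : input n -> input n -> R).
Hypotheses (HDge0 : forall x, 0 <= D x) (HDsum : \sum_(x : input n) D x = 1)
  (HDa : forall x, D x = cabs (a x) ^+ 2)
  (Hadv : adversary_matrix f G) (HGnz : exists x y, G x y != 0)
  (Hprin : principal_eigvec G a).
Local Notation C := R[i].

Let x0 : input n := [ffun=> false].

Lemma cnorm2_pair (phi : aspace n -> C) :
  cnorm2 phi = \sum_(i < n) \sum_(b : bool) cabs (phi (i, b)) ^+ 2.
Proof.
rewrite /cnorm2.
transitivity (\sum_(p : aspace n) cabs (phi (p.1, p.2)) ^+ 2).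
  by apply: eq_bigr => -[i b].
by rewrite -(pair_bigA _ (fun i b => cabs (phi (i, b)) ^+ 2)).
Qed.

Lemma s_pos : 0 < specnorm G.
Proof.
case: HGnz => x [y Gxy].
have e1 : rvnorm (fun z : input n => (z == y)%:R : R) = 1.
  rewrite /rvnorm (bigD1 y) //= eqxx expr1n big1 ?addr0 ?sqrtr1 // => z /negbTE ->.
  by rewrite expr0n.
have := specnorm_bound x0 G (fun z : input n => (z == y)%:R : R); rewrite e1 mulr1.
apply: lt_le_trans.
rewrite /rvnorm sqrtr_gt0 (bigD1 x) //=.
have -> : rmatvec G (fun z : input n => (z == y)%:R : R) x = G x y.
  rewrite /rmatvec (bigD1 y) //= eqxx mulr1 big1 ?addr0 // => z /negbTE ->.
  by rewrite mulr0.
rewrite ltr_pwDl //.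
  by rewrite lt_def sqrf_eq0 Gxy sqr_ge0.
by apply: sumr_ge0 => z _; rewrite sqr_ge0.
Qed.

Variables (U : nat -> aspace n -> aspace n -> C) (init : aspace n).
Local Notation psi x t := (qstate U init x t).
Local Notation A t := (cinner (joint_state a U init t) (IxGamma G (joint_state a U init t))).

Lemma A_Bf t : A t = Bf G (fun s x => a x * psi x t s) (fun s x => a x * psi x t s).
Proof. by rewrite /Bf pair_bigA. Qed.

Lemma A_swap t : A t = \sum_x \sum_y (G x y)%:C%C * (cconj (a x) * a y) *
                          cinner (psi x t) (psi y t).
Proof. rewrite A_Bf; exact: (Bf_swap G (fun x => psi x t) (fun x => psi x t) a). Qed.

Lemma psi0_norm x : unitary (U 0%N) -> cinner (psi x 0) (psi x 0) = 1.
Proof.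
move=> [HU _]; rewrite /= /cinner.
under eq_bigr do rewrite !cmatvec_basis.
by rewrite HU eqxx.
Qed.

Lemma part1 : unitary (U 0%N) -> Delta G a U init 0 = 0.
Proof.
move=> HU; rewrite /Delta A_swap.
case: Hprin => an [lam [hl hev]].
transitivity (specnorm G - cabs lam); last by rewrite hl subrr.
congr (_ - cabs _).
transitivity (\sum_x cconj (a x) * \sum_y (G x y)%:C%C * a y).
  apply: eq_bigr => x _; rewrite mulr_sumr; apply: eq_bigr => y _.
  by rewrite !psi0_norm //; ring.
under eq_bigr do rewrite hev mulrCA.
rewrite -mulr_sumr.
have -> : \sum_i cconj (a i) * a i = 1.
  by rewrite -[1](rmorph1 (real_complex R)) -an /cnorm2 rmorph_sum; apply: eq_bigr => x _; rewrite conjM.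
by rewrite mulr1.
Qed.

Lemma oracle_self x (phi : aspace n -> C) :
  cinner (oracle x phi) (oracle x phi) = cinner phi phi.
Proof.
apply/eqP; rewrite -subr_eq0; apply/eqP; rewrite oracle_inner big1 // => i _.
by rewrite eqxx.
Qed.

Lemma psi_norm T x t : memoryless_alg T U -> (t <= T)%N -> cinner (psi x t) (psi x t) = 1.
Proof.
move=> HU; elim: t => [|t IH] ht; first exact/psi0_norm/HU.
rewrite /= unitary_inner; last exact: HU.
by rewrite oracle_self IH // ltnW.
Qed.

Lemma psi_cnorm T x t : memoryless_alg T U -> (t <= T)%N -> cnorm2 (psi x t) = 1.
Proof.
move=> HU ht; apply: (@complexI R); rewrite -cinner_norm (psi_norm _ HU ht).
by rewrite rmorph1.
Qed.


Section Step.
Variables (T : nat) (HU : memoryless_alg T U) (t : nat) (ht : (t < T)%N).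
Let u (i : 'I_n) := fun (b : bool) (x : input n) => a x * psi x t (i, b).
Let w (i : 'I_n) := fun (b : bool) (x : input n) => a x * psi x t (i, ~~ b).

Lemma Bdiff i : Bf (Gamma_i G i) (u i) (w i) - Bf (Gamma_i G i) (u i) (u i) =
  \sum_x \sum_y (Gamma_i G i x y)%:C%C * (cconj (a x) * a y) *
     (cinner (fun b => psi x t (i, b)) (fun b => psi y t (i, ~~ b)) -
      cinner (fun b => psi x t (i, b)) (fun b => psi y t (i, b))).
Proof.
rewrite (Bf_swap (Gamma_i G i) (fun x b => psi x t (i, b)) (fun y b => psi y t (i, ~~ b)) a).
rewrite (Bf_swap (Gamma_i G i) (fun x b => psi x t (i, b)) (fun y b => psi y t (i, b)) a).
rewrite -sumrB; apply: eq_bigr => x _; rewrite -sumrB; apply: eq_bigr => y _.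
by rewrite mulrBr.
Qed.

Lemma A_diff : A t.+1 - A t =
  \sum_(i < n) (Bf (Gamma_i G i) (u i) (w i) - Bf (Gamma_i G i) (u i) (u i)).
Proof.
under [RHS]eq_bigr do rewrite Bdiff.
rewrite exchange_big; rewrite !A_swap -sumrB; apply: eq_bigr => x _.
rewrite exchange_big -sumrB; apply: eq_bigr => y _.
rewrite /= !unitary_inner; last exact: HU.
rewrite -mulrBr oracle_inner mulr_sumr; apply: eq_bigr => i _.
rewrite /Gamma_i; case: (x i != y i).
  by rewrite /cinner !big_bool /=; ring.
by rewrite rmorph0 !mul0r mulr0.
Qed.

Lemma sumNu : \sum_(i < n) Nf (u i) = 1.
Proof.
rewrite /Nf /u.
transitivity (\sum_x \sum_(i < n) \sum_(b : bool) cabs (a x * psi x t (i, b)) ^+ 2).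
  rewrite [RHS]exchange_big; apply: eq_bigr => i _; rewrite [RHS]exchange_big //.
rewrite -HDsum; apply: eq_bigr => x _.
under eq_bigr do under eq_bigr do rewrite cabsM exprMn.
under eq_bigr do rewrite -mulr_sumr.
rewrite -mulr_sumr -cnorm2_pair (psi_cnorm x HU (ltnW ht)) mulr1.
by rewrite HDa.
Qed.

Lemma step : Delta G a U init t.+1 <= Delta G a U init t + 2 * maxGi G.
Proof.
have key : cabs (A t.+1 - A t) <= 2 * maxGi G.
  rewrite A_diff (le_trans (cabs_sum _)) //.
  apply: (@le_trans _ _ (\sum_(i < n) 2 * maxGi G * Nf (u i))); last first.
    by rewrite -mulr_sumr sumNu mulr1.
  apply: ler_sum => i _.
  have hb := specnorm_bound2 x0 (Gamma_i G i).
  have hs := specnorm_ge0 x0 (Gamma_i G i).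
  have h1 := GL hs hb (u i) (w i).
  have h2 := GL hs hb (u i) (u i).
  have hm : specnorm (Gamma_i G i) <= maxGi G by exact: le_bigmax0.
  have hN := Nf_ge0 (u i).
  have hw : Nf (w i) = Nf (u i).
    by rewrite /Nf !big_bool /= addrC.
  rewrite hw in h1.
  have h3 := cabsD (Bf (Gamma_i G i) (u i) (w i)) (- Bf (Gamma_i G i) (u i) (u i)).
  rewrite cabsN in h3.
  apply: (le_trans h3).
  set s1 := specnorm (Gamma_i G i) in h1 h2 hm hs.
  set m := maxGi G in hm *.
  set N := Nf (u i) in h1 h2 hN *.
  have : s1 * N <= m * N by rewrite ler_wpM2r.
  lra.
rewrite /Delta.
have h : cabs (A t) <= cabs (A t.+1) + cabs (A t.+1 - A t).
  have h3 := cabsD (A t.+1) (- (A t.+1 - A t)).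
  by rewrite cabsN opprB addrC subrK in h3.
lra.
Qed.
End Step.

Section Succ.
Variables (T : nat) (HU : memoryless_alg T U).
Let g := fun (s : aspace n) (x : input n) => a x * proj_value (f x) (psi x T) s.
Let bb := fun (s : aspace n) (x : input n) => a x * proj_value (~~ f x) (psi x T) s.

Lemma A_split : A T = Bf G g bb + Bf G bb g.
Proof.
rewrite A_Bf /Bf -big_split; apply: eq_bigr => s _; rewrite -big_split.
apply: eq_bigr => x _ /=.
rewrite !mulr_sumr -big_split; apply: eq_bigr => y _ /=.
have [fe|fne] := eqVneq (f x) (f y).
  by rewrite (Hadv.2 x y fe) rmorph0 !mul0r !mulr0 addr0.
rewrite /g /bb /proj_value; case: s => i b /=.
move: fne; case: (f x); case: (f y); case: b => //= _;
  rewrite ?mulr0 /cconj ?conjc0 ?mulr0 ?mul0r ?addr0 ?add0r //.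
Qed.

Lemma Ng : Nf g = psucc f D U init T.
Proof.
rewrite /Nf /psucc exchange_big; apply: eq_bigr => x _.
rewrite HDa /cnorm2 mulr_sumr; apply: eq_bigr => s _.
by rewrite cabsM exprMn.
Qed.

Lemma Nsum : Nf g + Nf bb = 1.
Proof.
rewrite /Nf [X in X + _]exchange_big [X in _ + X]exchange_big -big_split -HDsum.
apply: eq_bigr => x _ /=; rewrite -big_split /=.
rewrite -[D x]mulr1 -(psi_cnorm x HU (leqnn T)) HDa /cnorm2 mulr_sumr.
apply: eq_bigr => s _; rewrite !cabsM !exprMn -mulrDr; congr (_ * _).
rewrite /proj_value; case: s => i b /=; case: b; case: (f x) => /=;
  by rewrite expr0n /= addr0 sqrtr0 expr0n /= ?addr0 ?add0r.
Qed.

Lemma part3 : psucc f D U init T <=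
  1 / 2 + Num.sqrt (Delta G a U init T / (2 * specnorm G)).
Proof.
set p := psucc f D U init T.
have Nbp : Nf bb = 1 - p by have := Nsum; rewrite Ng -/p; lra.
have sp := s_pos.
have hN := Nf_ge0 bb.
have p_le1 : p <= 1 by move: hN; rewrite Nbp subr_ge0.
have sq0 := sqrtr_ge0 (Delta G a U init T / (2 * specnorm G)).
case: (lerP p (1/2)) => hp; first by lra.
have key : 2 * specnorm G * (p - 1/2) ^+ 2 <= Delta G a U init T.
  rewrite /Delta A_split.
  have [p1|pn1] := eqVneq p 1.
    have b0 : forall k x, bb k x = 0 by apply: Nf_eq0; rewrite Nbp p1 subrr.
    rewrite Bf_zeroR // Bf_zeroL // addr0 cabs0 p1 subr0; nra.
  have lp : 0 < 1 - p by rewrite subr_gt0 lt_def eq_sym pn1 p_le1.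
  set c := Num.sqrt (2 * (1 - p)).
  have c2 : c ^+ 2 = 2 * (1 - p) by rewrite sqr_sqrtr // mulr_ge0 // ltW.
  have c0 : c != 0 by apply/eqP => c0; move: c2; rewrite c0 expr0n /=; lra.
  have h1 := GLc (specnorm_ge0 x0 G) (specnorm_bound2 x0 G) g bb c0.
  have h2 := GLc (specnorm_ge0 x0 G) (specnorm_bound2 x0 G) bb g (invr_neq0 c0).
  rewrite exprVn c2 invrK Ng Nbp -/p in h2.
  rewrite c2 Ng Nbp -/p in h1.
  have e1 : (1 - p) / (2 * (1 - p)) = 1 / 2 by field; lra.
  have e2 : (2 * (1 - p))^-1 * (1 - p) = 1 / 2 by rewrite mulrC e1.
  rewrite e1 in h1; rewrite e2 in h2.
  have h3 := cabsD (Bf G g bb) (Bf G bb g).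
  nra.
have hq : (p - 1/2) ^+ 2 <= Delta G a U init T / (2 * specnorm G).
  by rewrite ler_pdivlMr ?mulr_gt0 //; lra.
have : p - 1/2 <= Num.sqrt (Delta G a U init T / (2 * specnorm G)).
  rewrite -(ger0_norm (_ : 0 <= p - 1/2)); last by lra.
  by rewrite -sqrtr_sqr ler_wsqrtr.
lra.
Qed.
End Succ.

End Main.
Unset Implicit Arguments.
Theorem theorem5p2 (R : realType) (n : nat) (f : input n -> bool)
  (D : input n -> R) (a : input n -> R[i]) (G : input n -> input n -> R)
  (HDge0 : forall x, 0 <= D x) (HDsum : \sum_(x : input n) D x = 1)
  (HDa : forall x, D x = cabs (a x) ^+ 2)
  (Hadv : adversary_matrix f G) (HGnz : exists x y, G x y != 0)
  (Hprin : principal_eigvec G a) :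
  (forall (T : nat) (U : nat -> aspace n -> aspace n -> R[i]) (init : aspace n),
     memoryless_alg T U ->
     [/\ Delta G a U init 0 = 0,
         (forall t : nat, (t < T)%N ->
            Delta G a U init t.+1 <= Delta G a U init t + 2 * maxGi G) &
         psucc f D U init T <=
           1 / 2 + Num.sqrt (Delta G a U init T / (2 * specnorm G))]) /\
  (forall T : nat, solves_avg f D T -> specnorm G / (36 * maxGi G) <= T%:R).
Proof.
have P : forall (T : nat) (U : nat -> aspace n -> aspace n -> R[i]) (init : aspace n),
     memoryless_alg T U ->
     [/\ Delta G a U init 0 = 0,
         (forall t : nat, (t < T)%N ->
            Delta G a U init t.+1 <= Delta G a U init t + 2 * maxGi G) &
         psucc f D U init T <=
           1 / 2 + Num.sqrt (Delta G a U init T / (2 * specnorm G))].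
  move=> T U init HU; split.
  - exact: (part1 Hprin init (HU 0%N isT)).
  - by move=> t ht; exact: (step G HDsum HDa init HU ht).
  - exact: (part3 HDsum HDa Hadv HGnz init HU).
split => // T [U [init [HU Hs]]].
have [P1 P2 P3] := P T U init HU.
set m := maxGi G.
have m0 : 0 <= m by exact: bigmax0_ge0.
have sp := s_pos HGnz.
set s := specnorm G in sp P3 *.
have ind : forall t, (t <= T)%N -> Delta G a U init t <= 2 * t%:R * m.
  elim => [|t IH] ht; first by rewrite P1 mulr0 mul0r.
  have := P2 t ht; have := IH (ltnW ht); rewrite -/m -addn1 natrD; lra.
have hT := ind T (leqnn T).
set y := Delta G a U init T / (2 * s) in P3.
have hy : 1 / 6 <= Num.sqrt y by lra.
have y0 : 0 <= y.
  case: (lerP 0 y) => // /ltW /ler0_sqrtr h; rewrite h in hy; lra.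
have hy2 : 1 / 36 <= y.
  have := sqrtr_ge0 y; have := sqr_sqrtr y0; nra.
have hD : s / 18 <= Delta G a U init T.
  move: hy2; rewrite /y ler_pdivlMr ?mulr_gt0 //; lra.
have [m00|mp] := eqVneq m 0.
  by rewrite m00 mulr0 invr0 mulr0.
have mpos : 0 < m by rewrite lt_def mp m0.
rewrite ler_pdivrMr ?mulr_gt0 //.
nra.
Qed.
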